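(* For every $d\in\mathbf{N}I$, the characteristic function $\chi_d$ of $R_d$ belongs to the composition algebra $\mathcal{C}$.
   Context: $Q$ is a finite quiver without oriented cycles with vertex set $I$, $r_{ij}$ arrows $i\to j$, Euler form $\langle i,j\rangle=\delta_{ij}-r_{ij}$. $\mathbf{k}$ is a finite field with $v^2$ elements. $\mathcal{H}=\bigoplus_{d\in\mathbf NI}\mathcal{H}_d$ is the Hall algebra: $\mathcal{H}_d$ is the space of $G_d$-invariant functions $R_d\to\mathbf{C}$ on the set $R_d$ of representations of dimension type $d$ (invariant under $G_d=\prod_i\mathrm{GL}_{d_i}(\mathbf k)$), with product $(f*g)(X)=v^{\langle e,d\rangle}\sum_{U\subseteq X}f(U)g(X/U)$ for $f\in\mathcal{H}_d,g\in\mathcal{H}_e$ (sum over subrepresentations; $f(U)=0$ if $\underline{\dim}U\ne d$). $\chi_d\in\mathcal H_d$ is the constant function $1$ on $R_d$. $\mathcal{C}$ is the $\mathbf{C}$-subalgebra of $\mathcal{H}$ generated by the $\chi_i$, $i\in I$ (here $i$ is viewed as the dimension type with $1$ at $i$ and $0$ elsewhere). *)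

(* Defs.v *)
From HB Require Import structures.
From mathcomp Require Import all_boot all_order all_algebra.

Set Implicit Arguments.
Unset Strict Implicit.
Unset Printing Implicit Defensive.

Import Order.TTheory GRing.Theory Num.Theory.
Local Open Scope ring_scope.

(* Representations use the row-vector convention: the linear map attached to
   an arrow a : i -> j is x |-> x *m X a, with X a : 'M_(d i, d j). *)

Section Hall.

Variables (I : finType) (r : I -> I -> nat).

(* arrows: r i j arrows i -> j *)
Definition arrow := {p : I * I & 'I_(r p.1 p.2)}.
Definition src (a : arrow) : I := (tag a).1.
Definition tgt (a : arrow) : I := (tag a).2.

Definition quiver_rel : rel I := fun i j => (0 < r i j)%N.

Definition acyclic : Prop :=
  forall i j : I, (0 < r i j)%N -> ~~ connect quiver_rel j i.

Definition dvec := {ffun I -> nat}.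

Definition dzero : dvec := [ffun => 0%N].
Definition dsimple (i : I) : dvec := [ffun j => nat_of_bool (j == i)].

Definition euler (a b : dvec) : int :=
  (\sum_(i : I) ((a i * b i)%N)%:Z)
  - \sum_(i : I) \sum_(j : I) ((r i j * a i * b j)%N)%:Z.

Variable F : finFieldType.

Definition rep (d : dvec) :=
  {dffun forall a : arrow, 'M[F]_(d (src a), d (tgt a))}.

Variable C : numClosedFieldType.

Definition vq : C := sqrtC (#|F|%:R).

(* functions on all representations; H_d-components are f d *)
Definition hfun := forall d : dvec, rep d -> C.

(* families of subspaces U_i of k^{d_i}, in canonical form <<U_i>> *)
Definition subsp (d : dvec) := {dffun forall i : I, 'M[F]_(d i)}.

Definition is_subrep (d : dvec) (X : rep d) (U : subsp d) : bool :=
  [forall i, U i == <<U i>>%MS] &&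
  [forall a : arrow, (U (src a) *m X a <= U (tgt a))%MS].

Definition sub_dim (d : dvec) (U : subsp d) : dvec := [ffun i => \rank (U i)].
Definition quot_dim (d : dvec) (U : subsp d) : dvec :=
  [ffun i => (d i - \rank (U i))%N].

Definition sub_iso (d : dvec) (X : rep d) (U : subsp d) (Y : rep (sub_dim U))
  : bool :=
  [exists phi : {dffun forall i : I, 'M[F]_(sub_dim U i, d i)},
    [forall i, (phi i == U i)%MS] &&
    [forall a : arrow, Y a *m phi (tgt a) == phi (src a) *m X a]].

Definition quot_iso (d : dvec) (X : rep d) (U : subsp d) (Z : rep (quot_dim U))
  : bool :=
  [exists psi : {dffun forall i : I, 'M[F]_(d i, quot_dim U i)},
    [forall i, (kermx (psi i) == U i)%MS && row_full (psi i)] &&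
    [forall a : arrow, X a *m psi (tgt a) == psi (src a) *m Z a]].

Arguments sub_iso {d} X U Y.
Arguments quot_iso {d} X U Z.

(* f(U) and f(X/U) (well defined for G-invariant f) *)
Definition eval_sub (f : hfun) (d : dvec) (X : rep d) (U : subsp d) : C :=
  if [pick Y : rep (sub_dim U) | sub_iso X U Y] is Some Y then f _ Y else 0.
Definition eval_quot (f : hfun) (d : dvec) (X : rep d) (U : subsp d) : C :=
  if [pick Z : rep (quot_dim U) | quot_iso X U Z] is Some Z then f _ Z else 0.

Definition hall_mul (f g : hfun) : hfun := fun d X =>
  \sum_(U : subsp d | is_subrep X U)
     vq ^ (euler (quot_dim U) (sub_dim U)) * eval_sub f X U * eval_quot g X U.

Definition hall_add (f g : hfun) : hfun := fun d X => f d X + g d X.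
Definition hall_scale (c : C) (f : hfun) : hfun := fun d X => c * f d X.

Definition chi (e : dvec) : hfun := fun d _ => if d == e then 1 else 0.

Inductive in_comp : hfun -> Prop :=
| comp_gen (i : I) : in_comp (chi (dsimple i))
| comp_one : in_comp (chi dzero)
| comp_add f g : in_comp f -> in_comp g -> in_comp (hall_add f g)
| comp_scale (c : C) f : in_comp f -> in_comp (hall_scale c f)
| comp_mul f g : in_comp f -> in_comp g -> in_comp (hall_mul f g)
| comp_ext f g : in_comp f -> (forall d X, f d X = g d X) -> in_comp g.

End Hall.

(* Main.v *)
Require Import Defs.
From HB Require Import structures.
From mathcomp Require Import all_boot all_order all_algebra.
From mathcomp Require Import zify.
Set Implicit Arguments. Unset Strict Implicit. Unset Printing Implicit Defensive.
Import Order.TTheory GRing.Theory Num.Theory.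
Local Open Scope ring_scope.

Lemma quot_map (F : fieldType) n (U : 'M[F]_n) :
  exists psi : 'M[F]_(n, n - \rank U), (kermx psi == U)%MS && row_full psi.
Proof.
set K := cokermx U.
have gen : forall q (cb : 'M[F]_(n,q)) (rb : 'M[F]_(q,n)), cb *m rb = K ->
    row_full cb -> row_free rb -> q = (n - \rank U)%N ->
    exists psi : 'M[F]_(n, n - \rank U), (kermx psi == U)%MS && row_full psi.
  move=> q cb rb eK fcb frb eq; subst q; exists cb; rewrite fcb andbT.
  apply/andP; split.
    by rewrite submxE -/K -eK mulmxA mulmx_ker mul0mx.
  rewrite sub_kermx; apply/eqP; apply: (row_free_inj frb).
  rewrite mul0mx -mulmxA eK; apply/eqP; rewrite /K -submxE; exact: submx_refl.
exact: gen (col_base K) (row_base K) (mulmx_base K) (col_base_full K)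
  (row_base_free K) (mxrank_coker U).
Qed.

Section S.
Variables (I : finType) (r : I -> I -> nat) (F : finFieldType) (C : numClosedFieldType).

Lemma sub_iso_ex d (X : rep r F d) (U : subsp F d) :
  is_subrep X U -> exists Y, @sub_iso _ _ _ _ X U Y.
Proof.
move=> /andP[_ /forallP HX].
have Hphi : forall i, exists M : 'M[F]_(sub_dim U i, d i), (M == U i)%MS.
  move=> i; rewrite /sub_dim ffunE; exists (row_base (U i)).
  apply/eqmxP; exact: eq_row_base.
pose phi : {dffun forall i : I, 'M[F]_(sub_dim U i, d i)} :=
  [ffun i => xchoose (Hphi i)].
have Pphi i : (phi i == U i)%MS by rewrite (ffunE (fun i => xchoose (Hphi i))); exact: (xchooseP (Hphi i)).
exists ([ffun a => phi (src a) *m X a *m pinvmx (phi (tgt a))] : rep r F (sub_dim U)).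
apply/existsP; exists phi; apply/andP; split; first by apply/forallP => i; apply: Pphi.
apply/forallP => a.
rewrite (ffunE (fun a => phi (src a) *m X a *m pinvmx (phi (tgt a)))) mulmxKpV //.
rewrite (eqmxMr _ (eqmxP (Pphi (src a)))) (eqmxP (Pphi (tgt a))).
exact: HX.
Qed.

Lemma quot_iso_ex d (X : rep r F d) (U : subsp F d) :
  is_subrep X U -> exists Z, @quot_iso _ _ _ _ X U Z.
Proof.
move=> /andP[_ /forallP HX].
have Hpsi : forall i, exists M : 'M[F]_(d i, quot_dim U i),
    (kermx M == U i)%MS && row_full M.
  by move=> i; rewrite /quot_dim ffunE; exact: quot_map.
pose psi : {dffun forall i : I, 'M[F]_(d i, quot_dim U i)} :=
  [ffun i => xchoose (Hpsi i)].
have Ppsi i : (kermx (psi i) == U i)%MS && row_full (psi i)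
  by rewrite (ffunE (fun i => xchoose (Hpsi i))); exact: (xchooseP (Hpsi i)).
exists ([ffun a => pinvmx (psi (src a)) *m X a *m psi (tgt a)]
   : rep r F (quot_dim U)).
apply/existsP; exists psi; apply/andP; split; first by apply/forallP => i; apply: Ppsi.
apply/forallP => a.
rewrite (ffunE (fun a => pinvmx (psi (src a)) *m X a *m psi (tgt a))).
set s := src a; set t := tgt a.
have /andP[Ks Fs] := Ppsi s.
have /andP[Kt _] := Ppsi t.
rewrite mulmxA mulmxA.
have hP : pinvmx (psi s) *m psi s = 1%:M.
  by rewrite -{1}[pinvmx _]mul1mx mulmxKpV // sub1mx.
have h1 : (1%:M - psi s *m pinvmx (psi s)) *m psi s = 0.
  by rewrite mulmxBl mul1mx -mulmxA hP mulmx1 subrr.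
have h2 : ((1%:M - psi s *m pinvmx (psi s)) *m X a <= kermx (psi t))%MS.
  rewrite (eqmxP Kt); apply: submx_trans (HX a).
  apply: submxMr; rewrite -(eqmxP Ks); exact/sub_kermxP.
move/sub_kermxP: h2; rewrite !mulmxBl !mul1mx => /eqP; rewrite subr_eq0.
move=> H; exact H.
Qed.
End S.

Section S3.
Variables (I : finType) (r : I -> I -> nat) (F : finFieldType) (C : numClosedFieldType).

Lemma eval_sub_chi d (X : rep r F d) (U : subsp F d) (e : dvec I) :
  is_subrep X U -> eval_sub (chi C e) X U = (sub_dim U == e)%:R.
Proof.
move=> HU; rewrite /eval_sub; case: pickP => [Y _ | H].
  by rewrite /chi; case: eqP.
have [Y HY] := sub_iso_ex HU; by rewrite H in HY.
Qed.

Lemma eval_quot_chi d (X : rep r F d) (U : subsp F d) (e : dvec I) :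
  is_subrep X U -> eval_quot (chi C e) X U = (quot_dim U == e)%:R.
Proof.
move=> HU; rewrite /eval_quot; case: pickP => [Y _ | H].
  by rewrite /chi; case: eqP.
have [Y HY] := quot_iso_ex HU; by rewrite H in HY.
Qed.

Lemma sink_ex (acyc : acyclic r) (d : dvec I) i0 : (0 < d i0)%N ->
  exists i, (0 < d i)%N /\ forall j, (0 < r i j)%N -> d j = 0%N.
Proof.
move=> d0.
pose reach (x : I) := #|[set k | connect (quiver_rel r) x k]|.
have [i Pi Hmin] := @arg_minnP I i0 (fun j => 0 < d j)%N reach d0.
exists i; split => // j rij; apply/eqP; rewrite -leqn0 leqNgt; apply/negP => dj.
have Hp : [set k | connect (quiver_rel r) j k] \proper [set k | connect (quiver_rel r) i k].
  apply/properP; split.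
    apply/subsetP => k; rewrite !inE => cjk; apply: connect_trans cjk.
    exact: connect1.
  by exists i; rewrite !inE ?connect0 //; apply: acyc.
have := Hmin j dj; rewrite /reach => le.
by move: (proper_card Hp); rewrite ltnNge le.
Qed.

Lemma thin m n (A : 'M[F]_(m, n)) (B : 'M[F]_n) : n = 0%N -> (A <= B)%MS.
Proof. by move=> e; move: A B; rewrite e => A B; rewrite (thinmx0 A) sub0mx. Qed.

End S3.

Section S4.
Variables (I : finType) (r : I -> I -> nat) (F : finFieldType) (C : numClosedFieldType).
Variables (d : dvec I) (i : I).
Hypothesis acyc : acyclic r.
Hypothesis hdi : (0 < d i)%N.
Hypothesis hsink : forall j, (0 < r i j)%N -> d j = 0%N.

Definition d' : dvec I := [ffun j => (d j - (j == i))%N].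

Definition Qf D (U : subsp F D) : bool :=
  [forall j, U j == <<U j>>%MS] && (sub_dim U == dsimple i) && (quot_dim U == d').

Lemma dim_eq D (U : subsp F D) : sub_dim U == dsimple i -> quot_dim U == d' -> D = d.
Proof.
move=> /eqP hs /eqP hq; apply/ffunP => j.
move/ffunP/(_ j): hs; move/ffunP/(_ j): hq.
rewrite !ffunE; have := rank_leq_col (U j).
case: eqP => [->|_] /=; lia.
Qed.

Lemma subrep_char D (X : rep r F D) (U : subsp F D) :
  sub_dim U == dsimple i -> quot_dim U == d' ->
  is_subrep X U = [forall j, U j == <<U j>>%MS].
Proof.
move=> hs hq; have eD := dim_eq hs hq; subst D.
rewrite /is_subrep; apply: andb_idr => _; apply/forallP => a.
case: (eqVneq (src a) i) => hsa.
  apply: thin; apply: hsink; rewrite -hsa.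
  exact: leq_ltn_trans (leq0n _) (ltn_ord (tagged a)).
move/eqP/ffunP: hs => /(_ (src a)); rewrite !ffunE (negbTE hsa) /=.
by move/eqP; rewrite mxrank_eq0 => /eqP ->; rewrite mul0mx sub0mx.
Qed.

Definition Kc : C := \sum_(U : subsp F d | Qf U) vq F C ^ euler r d' (dsimple i).

Lemma mul_eval D (X : rep r F D) :
  hall_mul (chi C (dsimple i)) (chi C d') X = if D == d then Kc else 0.
Proof.
rewrite /hall_mul.
rewrite (eq_bigr (fun U => vq F C ^ (euler r (quot_dim U) (sub_dim U))
   * (sub_dim U == dsimple i)%:R * (quot_dim U == d')%:R)); last first.
  by move=> U HU; rewrite eval_sub_chi // eval_quot_chi.
transitivity (\sum_(U : subsp F D | Qf U) vq F C ^ euler r d' (dsimple i)).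
  rewrite big_mkcond [in RHS]big_mkcond; apply: eq_bigr => U _.
  rewrite /Qf.
  case Hs: (sub_dim U == dsimple i); case Hq: (quot_dim U == d');
    rewrite ?mulr0 ?andbF ?mul0r ?if_same //.
  by rewrite (subrep_char X Hs Hq) (eqP Hs) (eqP Hq) !andbT !mulr1.
case: (eqVneq D d) => [eD | nD].
  by subst D.
rewrite big_pred0 // => U; apply/negP => /andP[/andP[_ hs] hq].
by move: nD; rewrite (dim_eq hs hq) eqxx.
Qed.

Definition u0f (j : I) : 'M[F]_(d j) := if j == i then <<(pid_mx 1 : 'M[F]_(d j))>>%MS else 0.
Definition U0 : subsp F d := [ffun j => u0f j].

Lemma QU0 : Qf U0.
Proof.
rewrite /Qf -andbA; apply/and3P; split.
- apply/forallP => j; rewrite /U0 (ffunE u0f) /u0f.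
  by case: (j == i) => /=; rewrite ?genmx_id ?genmx0.
- apply/eqP/ffunP => j; rewrite /sub_dim ffunE /U0 (ffunE u0f) /u0f /dsimple ffunE.
  case: eqP => [->|_]; last by rewrite mxrank0.
  by rewrite genmxE rank_pid_mx.
- apply/eqP/ffunP => j; rewrite /quot_dim ffunE /U0 (ffunE u0f) /u0f /d' ffunE.
  case: eqP => [->|_]; last by rewrite mxrank0.
  by rewrite genmxE rank_pid_mx.
Qed.

Lemma Kc_gt0 : 0 < Kc.
Proof.
have vq_gt0 : 0 < vq F C.
  rewrite /vq sqrtC_gt0 ltr0n; apply/card_gt0P; by exists 0.
rewrite /Kc (bigD1 U0 QU0) /=.
apply: ltr_wpDr; last exact: exprz_gt0.
by apply: sumr_ge0 => U _; apply: ltW; apply: exprz_gt0.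
Qed.

Lemma step : @in_comp I r F C (@chi I r F C d') -> @in_comp I r F C (@chi I r F C d).
Proof.
move=> H.
eapply comp_ext; first exact: (comp_scale Kc^-1 (comp_mul (comp_gen r F C i) H)).
move=> D X.
rewrite /hall_scale mul_eval /chi; case: eqP => _; last by rewrite mulr0.
by rewrite mulVf // gt_eqF ?Kc_gt0.
Qed.

End S4.

Theorem mainTheorem6 (I : finType) (r : I -> I -> nat) (acyc : acyclic r)
  (F : finFieldType) (C : numClosedFieldType) (d : dvec I) :
  @in_comp I r F C (@chi I r F C d).
Proof.
have dsum_ge : forall (e : dvec I) j, (e j <= \sum_k e k)%N.
  by move=> e j; rewrite (bigD1 j) //= leq_addr.
move: {2}(\sum_k d k)%N (leqnn (\sum_k d k)) => n.
elim: n d => [|n IH] e he;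
  case: (pickP (fun j => (0 < e j)%N)) => [i0 hi0 | hz].
- have := dsum_ge e i0; move: hi0 => /= hi0; lia.
- have -> : e = @dzero I.
    by apply/ffunP => j; rewrite ffunE; move: (hz j) => /=; case: (e j).
  exact: comp_one.
- have [i [hi hs]] := sink_ex acyc hi0.
  apply: (step hi hs); apply: IH.
  have : (\sum_k d' e i k < \sum_k e k)%N.
    rewrite (bigD1 i) //= [in X in (_ < X)%N](bigD1 i) //= /d' ffunE eqxx subn1.
    rewrite (eq_bigr (fun j => e j)); last first.
      by move=> j /negbTE hj; rewrite ffunE hj subn0.
    by rewrite ltn_add2r ltn_predL.
  lia.
- have -> : e = @dzero I.
    by apply/ffunP => j; rewrite ffunE; move: (hz j) => /=; case: (e j).
  exact: comp_one.
Qed.
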